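(* Let $F,F'$ be instances over the same schema such that there is no surjective homomorphism from $F$ onto $F'$. Then there exists a subinstance $H$ of $F'$ such that $\hom_{\mathbb{N}}(F,H)\neq\hom_{\mathbb{N}}(F',H)$.
   Context: An instance $A$ over a schema $\sigma$ (a finite set of relation symbols with arities) assigns to each $R\in\sigma$ a finite relation $R^A$ of the corresponding arity; $\mathrm{adom}(A)$ is the set of elements occurring in its tuples. A homomorphism $h:A\to B$ is a map $\mathrm{adom}(A)\to\mathrm{adom}(B)$ preserving every relation; it is surjective if its image is $\mathrm{adom}(B)$. $\hom_{\mathbb{N}}(A,B)$ is the number of homomorphisms $A\to B$. $A$ is a subinstance of $B$ if $R^A\subseteq R^B$ for every $R\in\sigma$. *)

(* Defs.v *)
From mathcomp Require Import all_boot.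
Set Implicit Arguments. Unset Strict Implicit. Unset Printing Implicit Defensive.

(* An instance assigns to each symbol R a finite relation, given as a finite
   list of [ar R]-tuples (only membership matters). *)
Definition instance (V : choiceType) (sig : finType) (ar : sig -> nat) :=
  forall R : sig, seq ((ar R).-tuple V).

Section Instances.
Variables (V : choiceType) (sig : finType) (ar : sig -> nat).

Definition adom (A : instance V ar) : seq V :=
  undup (flatten [seq flatten [seq val t | t <- A R] | R <- enum sig]).

Definition subinstance (A B : instance V ar) : Prop :=
  forall R : sig, {subset A R <= B R}.

Definition adom_map (A B : instance V ar) :=
  {ffun seq_sub (adom A) -> seq_sub (adom B)}.

(* extension of such a map to all of V (default outside adom(A) is irrelevant,
   since only elements of adom(A) are ever evaluated) *)
Definition ext_map (A B : instance V ar) (h : adom_map A B) (x : V) : V :=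
  match insub x with
  | Some y => val (h y)
  | None => x
  end.

Definition is_hom (A B : instance V ar) (h : adom_map A B) : bool :=
  [forall R : sig, all (fun t => map_tuple (ext_map h) t \in B R) (A R)].

Definition is_surj (A B : instance V ar) (h : adom_map A B) : bool :=
  [forall y : seq_sub (adom B), exists x : seq_sub (adom A), h x == y].

Definition hom_count (A B : instance V ar) : nat :=
  #|[pred h : adom_map A B | is_hom h]|.

Definition exists_surj_hom (A B : instance V ar) : Prop :=
  exists h : adom_map A B, is_hom h && is_surj h.

End Instances.

(* Main.v *)
Require Import Defs.
From mathcomp Require Import all_boot.
Set Implicit Arguments. Unset Strict Implicit. Unset Printing Implicit Defensive.

Section Aux.
Variables (V : choiceType) (sig : finType) (ar : sig -> nat).

Lemma mem_adom (A : instance V ar) x :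
  reflect (exists R, exists2 t, t \in A R & x \in val t) (x \in adom A).
Proof.
rewrite /adom mem_undup; apply: (iffP flattenP).
  move=> [s /mapP [R _ ->] /flattenP [s' /mapP [t tA ->] xt]].
  by exists R; exists t.
move=> [R [t tA xt]].
exists (flatten [seq val t0 | t0 <- A R]); first by apply/mapP; exists R; rewrite ?mem_enum.
by apply/flattenP; exists (val t) => //; apply/mapP; exists t.
Qed.

Lemma ext_map_in (A B : instance V ar) (h : adom_map A B) (y : seq_sub (adom A)) :
  ext_map h (val y) = val (h y).
Proof. by rewrite /ext_map valK. Qed.

Lemma ext_map_id (A : instance V ar) :
  ext_map ([ffun x => x] : adom_map A A) =1 id.
Proof.
move=> x; rewrite /ext_map; case: insubP => [y _ <-|] //=.
by rewrite ffunE.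
Qed.

Variable F' : instance V ar.
Local Notation U := (adom F').

Definition inS (S : {set seq_sub U}) (x : V) : bool :=
  if insub x is Some u then u \in S else false.

Lemma inS_val S (u : seq_sub U) : inS S (val u) = (u \in S).
Proof. by rewrite /inS valK. Qed.

Definition restr (S : {set seq_sub U}) : instance V ar :=
  fun R => [seq t <- F' R | all (inS S) (val t)].

Definition im (A : instance V ar) (h : adom_map A F') : {set seq_sub U} :=
  [set y | [exists x, h x == y]].

Definition Ncnt (A : instance V ar) (S : {set seq_sub U}) := #|[set h : adom_map A F' | is_hom h && (im h \subset S)]|.
Definition Ecnt (A : instance V ar) (S : {set seq_sub U}) := #|[set h : adom_map A F' | is_hom h && (im h == S)]|.

Lemma adom_restr S x : x \in adom (restr S) -> (x \in U) && inS S x.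
Proof.
move/mem_adom=> [R [t]]; rewrite mem_filter => /andP [allt tF xt].
apply/andP; split; last by move/allP: allt; apply.
by apply/mem_adom; exists R; exists t.
Qed.

Section Lift.
Variables (A : instance V ar) (S : {set seq_sub U}).

Definition lift (g : adom_map A (restr S)) : adom_map A F' :=
  [ffun x => SeqSub (proj1 (andP (adom_restr (ssvalP (g x)))))].

Lemma lift_val g y : val (lift g y) = val (g y).
Proof. by rewrite ffunE. Qed.

Lemma lift_inj : injective lift.
Proof.
move=> g1 g2 E; apply/ffunP => y; apply: val_inj.
by rewrite -!lift_val E.
Qed.

Lemma ext_lift g : ext_map (lift g) =1 ext_map g.
Proof. by move=> x; rewrite /ext_map; case: insub => //= y; rewrite lift_val. Qed.

Lemma im_lift g : im (lift g) \subset S.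
Proof.
apply/subsetP => u; rewrite inE => /existsP [y /eqP <-].
rewrite -inS_val lift_val.
by case/andP: (adom_restr (ssvalP (g y))).
Qed.

Lemma all_inS (h : adom_map A F') R t : im h \subset S -> t \in A R ->
  all (inS S) (map_tuple (ext_map h) t).
Proof.
move=> sub tA; apply/allP => z; rewrite /= => /mapP [x xt ->].
have xA : x \in adom A by apply/mem_adom; exists R; exists t.
have -> : x = val (SeqSub xA : seq_sub (adom A)) by [].
rewrite ext_map_in inS_val; apply: (subsetP sub); rewrite inE.
by apply/existsP; exists (SeqSub xA).
Qed.

Lemma hom_lift g : is_hom g = is_hom (lift g).
Proof.
rewrite /is_hom; apply: eq_forallb => R; apply: eq_in_all => t tA.
have Em : map_tuple (ext_map (lift g)) t = map_tuple (ext_map g) t.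
  by apply: val_inj; rewrite /= (eq_map (ext_lift g)).
rewrite Em /restr mem_filter.
have := all_inS (im_lift g) tA.
by rewrite Em => ->.
Qed.

Lemma hom_count_restr : hom_count A (restr S) = Ncnt A S.
Proof.
rewrite /hom_count /Ncnt.
rewrite -(card_imset (mem [pred g : adom_map A (restr S) | is_hom g]) lift_inj).
apply: eq_card => h; rewrite inE.
apply/imsetP/idP.
  by move=> [g]; rewrite inE /= => hg ->; rewrite -hom_lift hg im_lift.
move=> /andP [hh sub].
have Hy : forall y, val (h y) \in adom (restr S).
  move=> y; have := ssvalP y => /mem_adom [R [t tA yt]].
  have mF : map_tuple (ext_map h) t \in F' R.
    by move/forallP: hh => /(_ R) /allP; apply.
  apply/mem_adom; exists R; exists (map_tuple (ext_map h) t).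
    by rewrite /restr mem_filter mF all_inS.
  by rewrite -ext_map_in /=; apply: map_f.
have eqh : lift [ffun y => SeqSub (Hy y)] = h.
  by apply/ffunP => y; apply: val_inj; rewrite lift_val ffunE.
exists [ffun y => SeqSub (Hy y)]; last by rewrite eqh.
by rewrite inE /= hom_lift eqh.
Qed.

End Lift.

Lemma N_sum A S : Ncnt A S = \sum_(T : {set seq_sub U} | T \subset S) Ecnt A T.
Proof.
rewrite /Ncnt -sum1dep_card.
rewrite (partition_big (@im A) (fun T => T \subset S)); last by move=> h /andP [].
apply: eq_bigr => T TS; rewrite /Ecnt -sum1dep_card.
apply: eq_bigl => h; case: eqP => [E|]; rewrite ?andbT ?andbF //.
by rewrite E TS andbT.
Qed.

Lemma N_split A S : Ncnt A S = Ecnt A S + \sum_(T : {set seq_sub U} | T \proper S) Ecnt A T.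
Proof.
rewrite N_sum (bigD1 S) //=; congr (_ + _).
by apply: eq_bigl => T; rewrite properEneq andbC.
Qed.

Lemma E_eq A B : (forall S, Ncnt A S = Ncnt B S) -> forall S, Ecnt A S = Ecnt B S.
Proof.
move=> HN; suff H : forall n (S : {set seq_sub U}), #|S| <= n -> Ecnt A S = Ecnt B S.
  by move=> S; apply: (H #|S|).
elim=> [|n IH] S.
  rewrite leqn0 => /eqP /cards0_eq ->.
  have E0 : forall C : instance V ar, \sum_(T : {set seq_sub U} | T \proper set0) Ecnt C T = 0.
    move=> C; rewrite big_pred0 // => T.
    by apply/negbTE/negP => /proper_card; rewrite cards0.
  by have := HN set0; rewrite !N_split !E0 !addn0.
move=> Sn; have := HN S; rewrite !N_split.
rewrite (eq_bigr (fun T => Ecnt B T)); first by move/addIn.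
move=> T TS; apply: IH.
by rewrite -ltnS (leq_trans (proper_card TS)).
Qed.

End Aux.

Theorem mainTheorem12 (V : choiceType) (sig : finType) (ar : sig -> nat)
  (F F' : instance V ar) :
  ~ exists_surj_hom F F' ->
  exists H : instance V ar, subinstance H F' /\ hom_count F H <> hom_count F' H.
Proof.
move=> nsurj.
case: (boolP [exists S : {set seq_sub (adom F')}, Ncnt F S != Ncnt F' S]).
  move/existsP => [S /eqP NS]; exists (restr S); split.
    by move=> R t; rewrite /restr mem_filter => /andP [].
  by rewrite !hom_count_restr.
rewrite negb_exists => /forallP HN.
have HE := E_eq (fun S => eqP (negbNE (HN S))).
exfalso; apply: nsurj.
have : 0 < Ecnt F' [set: seq_sub (adom F')].
  apply/card_gt0P; exists [ffun x => x]; rewrite inE; apply/andP; split.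
    apply/forallP => R; apply/allP => t tF.
    by rewrite (_ : map_tuple _ t = t) //; apply: val_inj; rewrite /= (eq_map (ext_map_id _)) map_id.
  apply/eqP/setP => y; rewrite !inE; apply/existsP; exists y; by rewrite ffunE.
rewrite -HE => /card_gt0P [h]; rewrite inE => /andP [hh /eqP imh].
exists h; rewrite hh /=; apply/forallP => y; have : y \in im h by rewrite imh inE.
by rewrite inE.
Qed.
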